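(* Let $\odot$ be a non-degenerate pseudo-multiplication and let $\phi$ be the supremum of the set of $\odot$-finite elements of $[0,\infty]$. Let $\tau$ be a $\sigma$-maxitive measure on a $\sigma$-algebra $\mathcal{B}$ on a nonempty set $E$ having the Radon–Nikodym property with respect to the idempotent $\odot$-integral. Then $\tau(E)\le\phi$.
   Context: Write $\overline{\mathbb{R}}_+=[0,\infty]$. A pseudo-multiplication is a binary operation $\odot$ on $\overline{\mathbb{R}}_+$ with the following properties: - it is associative; - it is continuous on $(0,\infty)\times[0,\infty]$; - for every $t$, the map $s\mapsto s\odot t$ is continuous on $(0,\infty]$; - it is nondecreasing in each argument; - it has a left identity $1_\odot$, i.e. $1_\odot\odot t=t$ for all $t$; - it has no zero divisors, i.e. $s\odot t=0$ implies $s=0$ or $t=0$; - $0\odot t=t\odot 0=0$ for all $t$. Put $O(t)=\inf_{s>0}s\odot t$. An element $t$ is $\odot$-finite if $O(t)=0$, and $\odot$-infinite otherwise. The operation $\odot$ is non-degenerate if $1_\odot$ is $\odot$-finite. A $\sigma$-maxitive measure on $\mathcal{B}$ is a map $\nu:\mathcal{B}\to\overline{\mathbb{R}}_+$ with $\nu(\emptyset)=0$ and $\nu(\bigcup_j B_j)=\sup_j\nu(B_j)$ for every countable family. A map $f:E\to\overline{\mathbb{R}}_+$ is $\mathcal{B}$-measurable if $\{f>t\}\in\mathcal{B}$ for all $t\in[0,\infty)$. The idempotent $\odot$-integral is $\int^\infty_B f\odot d\tau=\sup_{t\in[0,\infty)}t\odot\tau(B\cap\{f>t\})$. $\nu\ll_\odot\tau$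 means $\nu(B)\le\infty\odot\tau(B)$ for every $B\in\mathcal{B}$ with $\tau(B)$ $\odot$-finite. $\tau$ has the Radon–Nikodym property if every $\sigma$-maxitive $\nu\ll_\odot\tau$ admits a $\mathcal{B}$-measurable $c:E\to\overline{\mathbb{R}}_+$ with $\nu(B)=\int^\infty_B c\odot d\tau$ for all $B\in\mathcal{B}$. *)

(* Defs.v *)
From Stdlib Require Import Reals.
Open Scope R_scope.

Inductive ERp : Type :=
| PFin (r : R) (H : 0 <= r)
| PInf.

Definition ERp_le (x y : ERp) : Prop :=
  match x, y with
  | PFin a _, PFin b _ => a <= b
  | _, PInf => True
  | PInf, PFin _ _ => False
  end.

Definition ERp_lt (x y : ERp) : Prop := ERp_le x y /\ x <> y.

Definition ERp0 : ERp := PFin 0 (Rle_refl 0).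

Definition pos_fin (x : ERp) : Prop :=
  match x with PFin r _ => 0 < r | PInf => False end.

Definition pos (x : ERp) : Prop :=
  match x with PFin r _ => 0 < r | PInf => True end.

Definition is_sup (A : ERp -> Prop) (s : ERp) : Prop :=
  (forall a, A a -> ERp_le a s) /\
  (forall u, (forall a, A a -> ERp_le a u) -> ERp_le s u).

Definition is_inf (A : ERp -> Prop) (s : ERp) : Prop :=
  (forall a, A a -> ERp_le s a) /\
  (forall u, (forall a, A a -> ERp_le u a) -> ERp_le u s).

Definition nbhd (x : ERp) (P : ERp -> Prop) : Prop :=
  match x with
  | PFin r _ => exists e, 0 < e /\
      forall y, (match y with PFin b _ => Rabs (b - r) < e | PInf => False end) -> P y
  | PInf => exists M : R,
      forall y, (match y with PFin b _ => M < b | PInf => True end) -> P y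
  end.

Definition cont_at_on (D : ERp -> Prop) (f : ERp -> ERp) (x : ERp) : Prop :=
  forall V, nbhd (f x) V ->
    exists U, nbhd x U /\ forall y, D y -> U y -> V (f y).

Definition cont2_at_on (D : ERp -> ERp -> Prop) (op : ERp -> ERp -> ERp)
    (s t : ERp) : Prop :=
  forall V, nbhd (op s t) V ->
    exists U1 U2, nbhd s U1 /\ nbhd t U2 /\
      forall s' t', D s' t' -> U1 s' -> U2 t' -> V (op s' t').

Definition is_pseudo_mult (op : ERp -> ERp -> ERp) (one : ERp) : Prop :=
  (forall a b c, op (op a b) c = op a (op b c)) /\
  (forall s t, pos_fin s -> cont2_at_on (fun s' _ => pos_fin s') op s t) /\
  (forall t s, pos s -> cont_at_on pos (fun s' => op s' t) s) /\
  (forall s s' t, ERp_le s s' -> ERp_le (op s t) (op s' t)) /\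
  (forall s t t', ERp_le t t' -> ERp_le (op s t) (op s t')) /\
  (forall t, op one t = t) /\
  (forall s t, op s t = ERp0 -> s = ERp0 \/ t = ERp0) /\
  (forall t, op ERp0 t = ERp0 /\ op t ERp0 = ERp0).

Definition op_finite (op : ERp -> ERp -> ERp) (t : ERp) : Prop :=
  is_inf (fun u => exists s, pos s /\ u = op s t) ERp0.

Definition non_degenerate (op : ERp -> ERp -> ERp) (one : ERp) : Prop :=
  op_finite op one.

Definition sigma_algebra {E : Type} (B : (E -> Prop) -> Prop) : Prop :=
  B (fun _ => True) /\
  (forall A, B A -> B (fun x => ~ A x)) /\
  (forall An : nat -> E -> Prop, (forall n, B (An n)) ->
     B (fun x => exists n, An n x)).

Definition sigma_maxitive {E : Type} (B : (E -> Prop) -> Prop)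
    (nu : (E -> Prop) -> ERp) : Prop :=
  nu (fun _ => False) = ERp0 /\
  forall Bn : nat -> E -> Prop, (forall n, B (Bn n)) ->
    is_sup (fun u => exists n, u = nu (Bn n)) (nu (fun x => exists n, Bn n x)).

Definition measurable {E : Type} (B : (E -> Prop) -> Prop) (f : E -> ERp) : Prop :=
  forall (t : R) (Ht : 0 <= t), B (fun x => ERp_lt (PFin t Ht) (f x)).

Definition is_idem_integral {E : Type} (op : ERp -> ERp -> ERp)
    (tau : (E -> Prop) -> ERp) (A : E -> Prop) (f : E -> ERp) (v : ERp) : Prop :=
  is_sup (fun u => exists (t : R) (Ht : 0 <= t),
            u = op (PFin t Ht) (tau (fun x => A x /\ ERp_lt (PFin t Ht) (f x)))) v.

Definition op_abs_cont {E : Type} (op : ERp -> ERp -> ERp) (B : (E -> Prop) -> Prop)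
    (nu tau : (E -> Prop) -> ERp) : Prop :=
  forall A, B A -> op_finite op (tau A) -> ERp_le (nu A) (op PInf (tau A)).

Definition radon_nikodym_property {E : Type} (op : ERp -> ERp -> ERp)
    (B : (E -> Prop) -> Prop) (tau : (E -> Prop) -> ERp) : Prop :=
  forall nu, sigma_maxitive B nu -> op_abs_cont op B nu tau ->
    exists c : E -> ERp, measurable B c /\
      forall A, B A -> is_idem_integral op tau A c (nu A).

(* Main.v *)
Require Import Defs.
From Stdlib Require Import Reals.
From Stdlib Require Import Classical ClassicalDescription ProofIrrelevance FunctionalExtensionality PropExtensionality Lia Lra.

Lemma le0 x : ERp_le ERp0 x.
Proof. destruct x; simpl; auto. Qed.

Lemma le_refl x : ERp_le x x.
Proof. destruct x; simpl; auto; apply Rle_refl. Qed.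

Lemma le_trans x y z : ERp_le x y -> ERp_le y z -> ERp_le x z.
Proof. destruct x, y, z; simpl; auto; try tauto. apply Rle_trans. Qed.

Lemma eq0 r (H : 0 <= r) : r = 0 -> PFin r H = ERp0.
Proof. intros ->. unfold ERp0. f_equal. apply proof_irrelevance. Qed.

Lemma le_x0 x : ERp_le x ERp0 -> x = ERp0.
Proof. destruct x; simpl; try tauto. intros; apply eq0; lra. Qed.

Lemma pos_iff x : Defs.pos x <-> x <> ERp0.
Proof.
  destruct x; simpl; split; intros.
  - intro E; injection E; lra.
  - destruct H; auto. subst. exfalso; apply H0, eq0; auto.
  - discriminate.
  - auto.
Qed.

Lemma lt_pos t Ht y : ERp_lt (PFin t Ht) y -> Defs.pos y.
Proof.
  destruct y; simpl; auto. intros [H1 H2].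
  destruct H1 as [H0|H0]; [lra|subst]. exfalso; apply H2; f_equal; apply proof_irrelevance.
Qed.

Lemma set_ext {E} (P Q : E -> Prop) : (forall x, P x <-> Q x) -> P = Q.
Proof. intros H; apply functional_extensionality; intro; apply propositional_extensionality; auto. Qed.

Lemma Hp n : 0 <= / INR (S n).
Proof. left; apply Rinv_0_lt_compat, lt_0_INR; lia. Qed.

Definition nu {E} (tau : (E -> Prop) -> ERp) phi one A :=
  if excluded_middle_informative (ERp_le (tau A) phi) then ERp0 else one.

Lemma nu_le {E} (tau : (E -> Prop) -> ERp) phi one A :
  ERp_le (tau A) phi -> nu tau phi one A = ERp0.
Proof. intros; unfold nu; destruct excluded_middle_informative; tauto. Qed.

Lemma nu_nle {E} (tau : (E -> Prop) -> ERp) phi one A :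
  ~ ERp_le (tau A) phi -> nu tau phi one A = one.
Proof. intros; unfold nu; destruct excluded_middle_informative; tauto. Qed.

Lemma key (op : ERp -> ERp -> ERp) one t b
  (Hassoc : forall a b c, op (op a b) c = op a (op b c))
  (Hmon2 : forall s t t', ERp_le t t' -> ERp_le (op s t) (op s t'))
  (Hzd : forall s t, op s t = ERp0 -> s = ERp0 \/ t = ERp0)
  (Hnd : op_finite op one) :
  t <> ERp0 -> ERp_le (op t b) one -> op_finite op b.
Proof.
  intros Ht Hle. split. intros; apply le0. intros u Hu.
  apply (proj2 Hnd). intros a [s [Hs ->]].
  eapply le_trans; [| apply Hmon2, Hle]. rewrite <- Hassoc. apply Hu.
  exists (op s t); split; auto. apply pos_iff. intro H.
  destruct (Hzd _ _ H); [apply pos_iff in Hs; auto | auto].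
Qed.

Theorem mainTheorem8 (op : ERp -> ERp -> ERp) (one : ERp)
  (Hop : is_pseudo_mult op one) (Hnd : non_degenerate op one)
  (phi : ERp) (Hphi : is_sup (op_finite op) phi)
  (E : Type) (HE : inhabited E) (B : (E -> Prop) -> Prop)
  (HB : sigma_algebra B) (tau : (E -> Prop) -> ERp)
  (Htau : sigma_maxitive B tau)
  (HRN : radon_nikodym_property op B tau) :
  ERp_le (tau (fun _ => True)) phi.
Proof.
  destruct Hop as (Hassoc & _ & _ & Hmon1 & Hmon2 & Hone & Hzd & Hzero).
  destruct (classic (one = ERp0)) as [H1|H1].
  { rewrite <- (Hone (tau _)), H1, (proj1 (Hzero _)). apply le0. }
  apply NNPP; intro Hnot.
  destruct Htau as [Htau0 Htaus].
  assert (Hnusig : sigma_maxitive B (nu tau phi one)).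
  { split.
    - apply nu_le. rewrite Htau0. apply le0.
    - intros Bn HBn. destruct (Htaus Bn HBn) as [Hub Hl].
      destruct (classic (ERp_le (tau (fun x => exists n, Bn n x)) phi)) as [Hc|Hc].
      + rewrite nu_le by auto. split.
        * intros a [n ->]. rewrite nu_le. apply le_refl.
          eapply le_trans; [apply Hub; eauto | auto].
        * intros; apply le0.
      + rewrite nu_nle by auto. split.
        * intros a [n ->]. unfold nu; destruct excluded_middle_informative;
            [apply le0 | apply le_refl].
        * intros u Hu.
          assert (Hex : exists n, ~ ERp_le (tau (Bn n)) phi).
          { apply NNPP; intro H. apply Hc, Hl. intros a [n ->].
            apply NNPP; intro; apply H; exists n; auto. }
          destruct Hex as [n Hn]. rewrite <- (nu_nle tau phi one (Bn n) Hn).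
          apply Hu; eauto. }
  assert (Hac : op_abs_cont op B (nu tau phi one) tau).
  { intros A HA Hf. rewrite nu_le. apply le0. apply (proj1 Hphi); auto. }
  destruct (HRN _ Hnusig Hac) as [c [Hc Hint]].
  set (Bs := fun n => match n with
                      | 0 => fun x => ~ ERp_lt ERp0 (c x)
                      | S n => fun x => ERp_lt (PFin (/INR (S n)) (Hp n)) (c x) end).
  assert (HBs : forall n, B (Bs n)).
  { intros [|n]; simpl.
    - exact (proj1 (proj2 HB) _ (Hc 0 (Rle_refl 0))).
    - apply Hc. }
  assert (Hunion : (fun _:E => True) = (fun x => exists n, Bs n x)).
  { apply set_ext; intro x; split; auto. intros _.
    destruct (classic (ERp_lt ERp0 (c x))) as [Hx|Hx].
    - apply lt_pos in Hx. destruct (c x) as [r Hr|] eqn:Ec.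
      + simpl in Hx. destruct (archimed_cor1 r Hx) as [[|N] [HN1 HN2]]; [lia|].
        exists (S N); unfold Bs. rewrite Ec. split.
        * left; exact HN1.
        * intro Eq; injection Eq as Eq'. assert (HH : / INR (S N) = r) by exact Eq'. lra.
      + exists 1%nat; simpl; rewrite Ec; split; simpl; auto. discriminate.
    - exists 0%nat; simpl; auto. }
  destruct (Htaus Bs HBs) as [_ Hleast]. rewrite <- Hunion in Hleast.
  assert (Hex : exists n, ~ ERp_le (tau (Bs n)) phi).
  { apply NNPP; intro H. apply Hnot, Hleast. intros a [n ->].
    apply NNPP; intro; apply H; exists n; auto. }
  destruct Hex as [[|n] Hn].
  - destruct (Hint (Bs 0%nat) (HBs 0%nat)) as [_ Hl].
    rewrite nu_nle in Hl by auto. apply H1, le_x0, Hl. intros a [t [Ht ->]].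
    replace (fun x => Bs 0%nat x /\ ERp_lt (PFin t Ht) (c x)) with (fun _:E => False).
    + rewrite Htau0, (proj2 (Hzero _)). apply le_refl.
    + apply set_ext; intro x; simpl; split; [tauto|]. intros [Hx1 Hx2].
      apply Hx1. apply lt_pos in Hx2. split; [apply le0|]. apply pos_iff in Hx2; auto.
  - destruct (Hint (Bs (S n)) (HBs (S n))) as [Hub _].
    rewrite nu_nle in Hub by auto.
    specialize (Hub _ (ex_intro _ (/ INR (S n)) (ex_intro _ (Hp n) eq_refl))).
    replace (fun x => Bs (S n) x /\ ERp_lt (PFin (/ INR (S n)) (Hp n)) (c x))
      with (Bs (S n)) in Hub by (apply set_ext; intro x; simpl; tauto).
    apply Hn, (proj1 Hphi).
    apply (key op one (PFin (/ INR (S n)) (Hp n))); auto.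
    apply pos_iff. change (0 < / INR (S n)). apply Rinv_0_lt_compat, lt_0_INR; lia.
Qed.
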